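(* Let $N\ge 1$, $d\ge 1$, let $p_1,\dots,p_N>0$ with $\sum_{c=1}^N p_c=1$, and let $f^1,\dots,f^N:\mathbb{R}^d\to\mathbb{R}$ be differentiable functions such that each $f^c$ is $L$-smooth and $m$-strongly convex, where $0<m\le L$. Let $\eta\in(0,\frac{1}{L+m}]$. Then for any vectors $\theta^1,\dots,\theta^N,\beta^1,\dots,\beta^N\in\mathbb{R}^d$, writing $\theta=\sum_{c=1}^N p_c\theta^c$, $\beta=\sum_{c=1}^N p_c\beta^c$, $G(\theta^{1:N})=\sum_{c=1}^N p_c\nabla f^c(\theta^c)$ and $G(\beta^{1:N})=\sum_{c=1}^N p_c\nabla f^c(\beta^c)$, we have $$\big\|\beta-\theta-\eta\big(G(\beta^{1:N})-G(\theta^{1:N})\big)\big\|_2^2\le (1-\eta m)\|\beta-\theta\|_2^2+4\eta L\sum_{c=1}^N p_c\big(\|\beta^c-\beta\|_2^2+\|\theta^c-\theta\|_2^2\big).$$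
   Context: A differentiable $g:\mathbb{R}^d\to\mathbb{R}$ is $L$-smooth if $g(y)\le g(x)+\langle\nabla g(x),y-x\rangle+\frac L2\|y-x\|_2^2$ for all $x,y$ (equivalently $\nabla g$ is $L$-Lipschitz), and $m$-strongly convex if $g(x)\ge g(y)+\langle\nabla g(y),x-y\rangle+\frac m2\|x-y\|_2^2$ for all $x,y$. *)

(* Defs.v *)
From HB Require Import structures.
From mathcomp Require Import all_boot all_order all_algebra.
From mathcomp Require Import all_classical all_reals all_analysis.
Set Implicit Arguments. Unset Strict Implicit. Unset Printing Implicit Defensive.
Import Order.TTheory GRing.Theory Num.Theory.
Import numFieldNormedType.Exports.
Local Open Scope ring_scope.

Section Defs.
Context {R : realType} {d : nat}.

Definition dotv (u v : 'rV[R]_d) : R := \sum_(i < d) u 0 i * v 0 i.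
Definition sqnorm (u : 'rV[R]_d) : R := dotv u u.

Definition grad (g : 'rV[R]_d -> R) (x : 'rV[R]_d) : 'rV[R]_d :=
  \row_(i < d) ('d g x (delta_mx 0 i : 'rV[R]_d)).

Definition L_smooth (L : R) (g : 'rV[R]_d -> R) : Prop :=
  forall x y, g y <= g x + dotv (grad g x) (y - x) + L / 2 * sqnorm (y - x).

Definition strongly_convex (m : R) (g : 'rV[R]_d -> R) : Prop :=
  forall x y, g x >= g y + dotv (grad g y) (x - y) + m / 2 * sqnorm (x - y).
End Defs.

(* Main.v *)
Require Import Defs.
From HB Require Import structures.
From mathcomp Require Import all_boot all_order all_algebra.
From mathcomp Require Import all_classical all_reals all_analysis.
From mathcomp Require Import ring lra.
Import Order.TTheory GRing.Theory Num.Theory.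
Import numFieldNormedType.Exports.
Local Open Scope ring_scope.

Lemma vec_id (V : zmodType) (x y u v : V) : (x - y) - (u - v) = (v - y) - (u - x).
Proof. by rewrite !opprB !addrA; congr (_ - _); rewrite addrC addrA addrAC. Qed.

Section V.
Context {R : realType} {d : nat}.
Implicit Types (u v w : 'rV[R]_d).

Lemma dotvC u v : dotv u v = dotv v u.
Proof. by rewrite /dotv; apply: eq_bigr => i _; rewrite mulrC. Qed.
Lemma dotvDl u v w : dotv (u + v) w = dotv u w + dotv v w.
Proof. by rewrite /dotv -big_split; apply: eq_bigr => i _; rewrite mxE mulrDl. Qed.
Lemma dotvZl k u w : dotv (k *: u) w = k * dotv u w.
Proof. by rewrite /dotv mulr_sumr; apply: eq_bigr => i _; rewrite mxE mulrA. Qed.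
Lemma dotvNl u w : dotv (- u) w = - dotv u w.
Proof. by rewrite -scaleN1r dotvZl mulN1r. Qed.
Lemma dotvBl u v w : dotv (u - v) w = dotv u w - dotv v w.
Proof. by rewrite dotvDl dotvNl. Qed.
Lemma dotvDr u v w : dotv w (u + v) = dotv w u + dotv w v.
Proof. by rewrite dotvC dotvDl !(dotvC w). Qed.
Lemma dotvZr k u w : dotv w (k *: u) = k * dotv w u.
Proof. by rewrite dotvC dotvZl dotvC. Qed.
Lemma dotvBr u v w : dotv w (u - v) = dotv w u - dotv w v.
Proof. by rewrite dotvC dotvBl !(dotvC w). Qed.
Lemma dotv_suml n (F : 'I_n -> 'rV[R]_d) w :
  dotv (\sum_(c < n) F c) w = \sum_(c < n) dotv (F c) w.
Proof.
rewrite /dotv exchange_big; apply: eq_bigr => i _.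
by rewrite summxE mulr_suml.
Qed.
Lemma dotv_sumr n (F : 'I_n -> 'rV[R]_d) w :
  dotv w (\sum_(c < n) F c) = \sum_(c < n) dotv w (F c).
Proof. by rewrite dotvC dotv_suml; apply: eq_bigr => c _; rewrite dotvC. Qed.
Lemma sqnorm_ge0 u : 0 <= sqnorm u.
Proof. by apply: sumr_ge0 => i _; rewrite -expr2 sqr_ge0. Qed.

Lemma sqnormB u v : sqnorm (u - v) = sqnorm u - 2 * dotv u v + sqnorm v.
Proof. rewrite /sqnorm !dotvBl !dotvBr (dotvC v u); ring. Qed.
Lemma sqnormD u v : sqnorm (u + v) = sqnorm u + 2 * dotv u v + sqnorm v.
Proof. rewrite /sqnorm !dotvDl !dotvDr (dotvC v u); ring. Qed.

Lemma sqnormB_le u v : sqnorm (u - v) <= 2 * sqnorm u + 2 * sqnorm v.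
Proof.
have := sqnorm_ge0 (u + v); rewrite sqnormB sqnormD; lra.
Qed.

Lemma sqnormN u : sqnorm (- u) = sqnorm u.
Proof. by rewrite /sqnorm dotvNl dotvC dotvNl opprK. Qed.

Lemma jensen n (p : 'I_n -> R) (v : 'I_n -> 'rV[R]_d) :
  (forall c, 0 <= p c) -> \sum_(c < n) p c = 1 ->
  sqnorm (\sum_(c < n) p c *: v c) <= \sum_(c < n) p c * sqnorm (v c).
Proof.
move=> hp hs; set vb := \sum_(c < n) p c *: v c.
have H : 0 <= \sum_(c < n) p c * sqnorm (v c - vb).
  by apply: sumr_ge0 => c _; apply: mulr_ge0 => //; apply: sqnorm_ge0.
have E : \sum_(c < n) p c * sqnorm (v c - vb) =
   \sum_(c < n) p c * sqnorm (v c) - 2 * dotv vb vb + sqnorm vb.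
  under eq_bigr => c _ do rewrite sqnormB !mulrDr mulrN.
  rewrite big_split big_split /= sumrN -!mulr_suml hs mul1r.
  congr (_ - _ + _).
  rewrite {3}/vb dotv_suml mulr_sumr; apply: eq_bigr => c _.
  by rewrite dotvZl; ring.
rewrite E /sqnorm in H; rewrite /sqnorm; lra.
Qed.


Lemma dotvNr u w : dotv w (- u) = - dotv w u.
Proof. by rewrite dotvC dotvNl dotvC. Qed.
Ltac expand := rewrite /sqnorm; repeat progress rewrite ?dotvDl ?dotvNl ?dotvZl ?dotvDr ?dotvNr ?dotvZr.

Lemma cocoer (L m : R) (g : 'rV[R]_d -> R) : 0 < m -> m <= L ->
  L_smooth L g -> strongly_convex m g -> forall x y,
  m * L * sqnorm (y - x) + sqnorm (grad g y - grad g x)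
    <= (L + m) * dotv (y - x) (grad g y - grad g x).
Proof.
move=> hm hmL; rewrite /L_smooth /strongly_convex; move: (grad g) => G hs hc x y.
have key : forall s, (2 * s - (L - m) * s ^+ 2) *
    sqnorm (G y - G x - m *: (y - x))
    <= dotv (y - x) (G y - G x - m *: (y - x)).
  move=> s.
  set w := G y - G x - m *: (y - x).
  have h1 := hc (y - s *: w) x.
  have h2 := hs y (y - s *: w).
  have h3 := hc (x + s *: w) y.
  have h4 := hs x (x + s *: w).
  move: h1 h2 h3 h4; rewrite /w.
  move: (G x) (G y) => u v.
  expand.
  rewrite ?(dotvC y x) ?(dotvC u x) ?(dotvC v x) ?(dotvC u y) ?(dotvC v y) ?(dotvC v u).
  move=> h1 h2 h3 h4.
  lra.
have hsum : dotv (y - x) (G y - G x - m *: (y - x)) <= (L - m) * sqnorm (y - x).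
  have h1 := hs x y; have h2 := hs y x.
  move: h1 h2; move: (G x) (G y) => u v.
  expand.
  rewrite ?(dotvC y x) ?(dotvC u x) ?(dotvC v x) ?(dotvC u y) ?(dotvC v y) ?(dotvC v u).
  move=> h1 h2; lra.
have E : (L + m) * dotv (y - x) (G y - G x) - (m * L * sqnorm (y - x)
     + sqnorm (G y - G x)) = (L - m) * dotv (y - x) (G y - G x - m *: (y - x))
     - sqnorm (G y - G x - m *: (y - x)).
  move: (G x) (G y) => u v.
  expand.
  rewrite ?(dotvC y x) ?(dotvC u x) ?(dotvC v x) ?(dotvC u y) ?(dotvC v y) ?(dotvC v u).
  ring.
rewrite -subr_ge0 E.
move: key hsum; move: (G y - G x - m *: (y - x)) => w; move: (sqnorm (y - x)) => A.
move=> key hsum.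
have hW := sqnorm_ge0 w.
have [hLm|hLm] := eqVneq L m.
  have := key 1; rewrite hLm subrr !mul0r mulr1 subr0 in hsum *.
  move=> k; lra.
have hpos : 0 < L - m by rewrite subr_gt0 lt_def hLm hmL.
have := key (1 / (L - m)).
have -> : 2 * (1 / (L - m)) - (L - m) * (1 / (L - m)) ^+ 2 = 1 / (L - m).
  by field; rewrite gt_eqF.
move=> k.
have := ler_wpM2l (ltW hpos) k.
have e1 : (L - m) * (1 / (L - m)) = 1 by field; rewrite gt_eqF.
rewrite mulrA e1 mul1r => k2; lra.
Qed.

Lemma scal (K eta m L X Y D A B e : R) : 0 < m -> m <= L -> K = L + m -> 0 < eta ->
  eta * K <= 1 -> 0 <= A -> 0 <= D -> 0 <= e ->
  m * L * A + D <= K * X -> - (2 * K * Y) <= K ^+ 2 * B + D -> B <= 2 * e ->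
  - (2 * eta * (X + Y)) + eta ^+ 2 * D <= - (eta * m * A) + 4 * eta * L * e.
Proof.
move=> hm hmL hK he heK hA hD hE h1 h2 h3.
have hKp : 0 < K by rewrite hK; lra.
suff : K * (- (2 * eta * (X + Y)) + eta ^+ 2 * D) <= K * (- (eta * m * A) + 4 * eta * L * e).
  by rewrite ler_pM2l.
have p1 := ler_wpM2l (ltW he) h1.
have p2 := ler_wpM2l (ltW he) h2.
have p3 := ler_wpM2l (mulr_ge0 (ltW he) (sqr_ge0 K)) h3.
have p4 := ler_wpM2l (mulr_ge0 (ltW he) hD) heK.
have p5 : eta * m * m * A <= eta * m * L * A.
  apply: ler_wpM2r => //; apply: ler_wpM2l => //; apply: mulr_ge0; lra.
have p6 : eta * K * e * K <= eta * K * e * (2 * L).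
  apply: ler_wpM2l; [apply: mulr_ge0 => //; apply: mulr_ge0; lra | lra].
rewrite hK in p1 p2 p3 p4 p6 *.
rewrite !expr2 in p2 p3 *.
lra.
Qed.

End V.

Lemma aux (R : realType) (N d : nat)
  (p : 'I_N -> R) (hp : forall c, 0 < p c) (hpsum : \sum_(c < N) p c = 1)
  (f : 'I_N -> 'rV[R]_d -> R) (L m : R) (hm : 0 < m) (hmL : m <= L)
  (hsmooth : forall c, L_smooth L (f c))
  (hconv : forall c, strongly_convex m (f c))
  (eta : R) (heta0 : 0 < eta) (heta : eta <= 1 / (L + m))
  (theta beta : 'I_N -> 'rV[R]_d) th be Gth Gbe :
  th = \sum_(c < N) p c *: theta c ->
  be = \sum_(c < N) p c *: beta c ->
  Gth = \sum_(c < N) p c *: grad (f c) (theta c) ->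
  Gbe = \sum_(c < N) p c *: grad (f c) (beta c) ->
  sqnorm (be - th - eta *: (Gbe - Gth))
    <= (1 - eta * m) * sqnorm (be - th)
       + 4 * eta * L * \sum_(c < N) p c * (sqnorm (beta c - be) + sqnorm (theta c - th)).
Proof.
move=> eth ebe eGth eGbe.
pose ac c := beta c - theta c.
pose dc c := grad (f c) (beta c) - grad (f c) (theta c).
have ha : be - th = \sum_(c < N) p c *: ac c.
  by rewrite ebe eth -sumrB; apply: eq_bigr => c _; rewrite scalerBr.
have hD : Gbe - Gth = \sum_(c < N) p c *: dc c.
  by rewrite eGbe eGth -sumrB; apply: eq_bigr => c _; rewrite scalerBr.
have hp0 : forall c, 0 <= p c by move=> c; apply: ltW.
have J1 := @jensen _ _ _ p ac hp0 hpsum.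
have J2 := @jensen _ _ _ p dc hp0 hpsum.
rewrite -ha in J1; rewrite -hD in J2.
move: J1 J2 ha hD.
set a := be - th; set D := Gbe - Gth => J1 J2 ha hD.
have E1 : sqnorm (a - eta *: D) = sqnorm a - 2 * eta * dotv a D + eta ^+ 2 * sqnorm D.
  by rewrite sqnormB dotvZr /sqnorm dotvZl dotvZr expr2 !mulrA.
have E2 : dotv a D = \sum_(c < N) p c * dotv a (dc c).
  by rewrite hD dotv_sumr; apply: eq_bigr => c _; rewrite dotvZr.
have hc : forall c, - (2 * eta * dotv a (dc c)) + eta ^+ 2 * sqnorm (dc c)
    <= - (eta * m * sqnorm (ac c)) + 4 * eta * L *
       (sqnorm (beta c - be) + sqnorm (theta c - th)).
  move=> c.
  have -> : dotv a (dc c) = dotv (ac c) (dc c) + dotv (a - ac c) (dc c).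
    by rewrite [dotv (a - _) _]dotvBl addrC subrK.
  have k1 := @cocoer R d L m (f c) hm hmL (hsmooth c) (hconv c) (theta c) (beta c).
  have k2 : - (2 * (L + m) * dotv (a - ac c) (dc c)) <=
      (L + m) ^+ 2 * sqnorm (a - ac c) + sqnorm (dc c).
    have := sqnorm_ge0 ((L + m) *: (a - ac c) + dc c).
    rewrite sqnormD /sqnorm dotvZl dotvZl dotvZr expr2; lra.
  have k3 : sqnorm (a - ac c) <= 2 * (sqnorm (beta c - be) + sqnorm (theta c - th)).
    have -> : a - ac c = (theta c - th) - (beta c - be).
      by rewrite /a /ac vec_id.
    by have := sqnormB_le (theta c - th) (beta c - be); lra.
  have heK : eta * (L + m) <= 1.
    have hK : 0 < L + m by lra.
    have := ler_wpM2r (ltW hK) heta.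
    by rewrite div1r mulVf ?gt_eqF.
  have he : 0 <= sqnorm (beta c - be) + sqnorm (theta c - th).
    by apply: addr_ge0; apply: sqnorm_ge0.
  exact: (@scal R (L + m) eta m L _ _ _ _ _ _ hm hmL erefl heta0 heK
     (sqnorm_ge0 _) (sqnorm_ge0 _) he k1 k2 k3).
set S1 := \sum_(c < N) p c * dotv a (dc c).
set S2 := \sum_(c < N) p c * sqnorm (dc c).
set S3 := \sum_(c < N) p c * sqnorm (ac c).
set S4 := \sum_(c < N) p c * (sqnorm (beta c - be) + sqnorm (theta c - th)).
have S : \sum_(c < N) p c * (- (2 * eta * dotv a (dc c)) + eta ^+ 2 * sqnorm (dc c))
    <= \sum_(c < N) p c * (- (eta * m * sqnorm (ac c)) + 4 * eta * L *
       (sqnorm (beta c - be) + sqnorm (theta c - th))).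
  by apply: ler_sum => c _; apply: ler_wpM2l.
have L1 : \sum_(c < N) p c * (- (2 * eta * dotv a (dc c)) + eta ^+ 2 * sqnorm (dc c))
    = - (2 * eta) * S1 + eta ^+ 2 * S2.
  rewrite /S1 /S2 !mulr_sumr -big_split /=; apply: eq_bigr => c _.
  move: (p c) (dotv a (dc c)) (sqnorm (dc c)) => x y z; ring.
have L2 : \sum_(c < N) p c * (- (eta * m * sqnorm (ac c)) + 4 * eta * L *
       (sqnorm (beta c - be) + sqnorm (theta c - th))) = - (eta * m) * S3 + 4 * eta * L * S4.
  rewrite /S3 /S4 !mulr_sumr -big_split /=; apply: eq_bigr => c _.
  move: (p c) (sqnorm (ac c)) (sqnorm (beta c - be) + sqnorm (theta c - th)) => x y z; ring.
rewrite L1 L2 in S.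
have P1 := ler_wpM2l (sqr_ge0 eta) J2.
have hem : 0 <= eta * m by apply: mulr_ge0; lra.
have P2 := ler_wpM2l hem J1.
rewrite E1 E2 -/S1.
rewrite -/S2 in P1; rewrite -/S3 in P2.
lra.
Qed.

Theorem lemma4p1 (R : realType) (N d : nat) (hN : (1 <= N)%N) (hd : (1 <= d)%N)
  (p : 'I_N -> R) (hp : forall c, 0 < p c) (hpsum : \sum_(c < N) p c = 1)
  (f : 'I_N -> 'rV[R]_d -> R) (L m : R) (hm : 0 < m) (hmL : m <= L)
  (hdiff : forall c x, differentiable (f c) x)
  (hsmooth : forall c, L_smooth L (f c))
  (hconv : forall c, strongly_convex m (f c))
  (eta : R) (heta0 : 0 < eta) (heta : eta <= 1 / (L + m))
  (theta beta : 'I_N -> 'rV[R]_d) :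
  let th := \sum_(c < N) p c *: theta c in
  let be := \sum_(c < N) p c *: beta c in
  let Gth := \sum_(c < N) p c *: grad (f c) (theta c) in
  let Gbe := \sum_(c < N) p c *: grad (f c) (beta c) in
  sqnorm (be - th - eta *: (Gbe - Gth))
    <= (1 - eta * m) * sqnorm (be - th)
       + 4 * eta * L * \sum_(c < N) p c * (sqnorm (beta c - be) + sqnorm (theta c - th)).
Proof.
exact (@aux R N d p hp hpsum f L m hm hmL hsmooth hconv eta heta0 heta theta beta
  _ _ _ _ erefl erefl erefl erefl).
Qed.
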